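(* Let $A$ be a finite alphabet and let $w \in A^{+}$ with $|w| \leq 3$. Then for every integer $k \geq 0$ the language $\mathrm{Count}(w,k)$ has generalised star-height $0$, and for every integer $n \geq 2$ and every integer $k$ with $0 \leq k < n$ the language $\mathrm{ModCount}(w,k,n)$ has generalised star-height at most $1$.
   Context: Let $A$ be a finite non-empty alphabet, $A^{\ast}$ the set of all words over $A$ (including the empty word $\varepsilon$), $A^{+}=A^{\ast}\setminus\{\varepsilon\}$, and $|w|$ the length of $w$. Generalised regular expressions over $A$: $\emptyset$, $\varepsilon$ and each letter $a\in A$ are expressions; if $E,F$ are expressions then so are $E\cup F$, $EF$, $E^{\ast}$ and $E^{c}$ (complement in $A^{\ast}$). The star-height $h$ of an expression is defined by $h(\emptyset)=h(\varepsilon)=h(a)=0$, $h(E\cup F)=h(EF)=\max\{h(E),h(F)\}$, $h(E^{\ast})=h(E)+1$, $h(E^{c})=h(E)$. The (generalised) star-height of a language $L\subseteq A^{\ast}$ is the minimum of $h(E)$ over all generalised regular expressions $E$ representing $L$. For $w\in A^{+}$ and $v\in A^{\ast}$, $|v|_{w}$ denotes the number of occurrences of $w$ as a contiguous subword (factor) of $v$, i.e. the number of factorisations $v=xwy$ with $x,y\in A^{\ast}$ (overlapping occurrences are counted separately; e.g. $|abababa|_{aba}=3$). For an integer $k\ge 0$, $\mathrm{Count}(w,k)=\{v\in A^{\ast} : |v|_{w}=k\}$; for integers $n\geq 2$ and $0\le k<n$, $\mathrm{ModCount}(w,k,n)=\{v\in A^{\ast} : |v|_{w}\equiv k \pmod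 n\}$. *)

(* Defs.v *)
From mathcomp Require Import all_boot.
Set Implicit Arguments. Unset Strict Implicit. Unset Printing Implicit Defensive.

Inductive gre (A : Type) : Type :=
| GEmpty : gre A
| GEps : gre A
| GLetter : A -> gre A
| GUnion : gre A -> gre A -> gre A
| GConc : gre A -> gre A -> gre A
| GStar : gre A -> gre A
| GCompl : gre A -> gre A.

Definition language (A : Type) := seq A -> Prop.

Fixpoint gre_lang (A : Type) (E : gre A) : language A :=
  match E with
  | GEmpty => fun _ => False
  | GEps => fun u => u = [::]
  | GLetter a => fun u => u = [:: a]
  | GUnion E F => fun u => gre_lang E u \/ gre_lang F u
  | GConc E F => fun u => exists x y, u = x ++ y /\ gre_lang E x /\ gre_lang F y
  | GStar E => fun u => exists ws : seq (seq A),
                 u = flatten ws /\ (forall i, i < size ws -> gre_lang E (nth [::] ws i))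
  | GCompl E => fun u => ~ gre_lang E u
  end.

Fixpoint star_height (A : Type) (E : gre A) : nat :=
  match E with
  | GEmpty | GEps | GLetter _ => 0
  | GUnion E F | GConc E F => maxn (star_height E) (star_height F)
  | GStar E => (star_height E).+1
  | GCompl E => star_height E
  end.

Definition represents (A : Type) (E : gre A) (L : language A) : Prop :=
  forall u, gre_lang E u <-> L u.

Definition gen_star_height_le (A : Type) (L : language A) (h : nat) : Prop :=
  exists E : gre A, represents E L /\ star_height E <= h.

Definition gen_star_height_eq (A : Type) (L : language A) (h : nat) : Prop :=
  gen_star_height_le L h /\ forall h', h' < h -> ~ gen_star_height_le L h'.

(* |v|_w : number of factorisations v = x w y. *)
Definition occ (A : eqType) (w v : seq A) : nat :=
  count (fun i => take (size w) (drop i v) == w) (iota 0 (size v).+1).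

Definition Count (A : eqType) (w : seq A) (k : nat) : language A :=
  fun v => occ w v = k.

Definition ModCount (A : eqType) (w : seq A) (k n : nat) : language A :=
  fun v => occ w v %% n = k.

(* Main.v *)
Require Import Defs.
From mathcomp Require Import all_boot.
From mathcomp Require Import zify.
From Stdlib Require Import Classical.
Set Implicit Arguments. Unset Strict Implicit. Unset Printing Implicit Defensive.

Definition sw (A : eqType) (w z : seq A) : bool := take (size w) z == w.

Fixpoint occR (A : eqType) (w v : seq A) : nat :=
  match v with [::] => 0 | a :: z => sw w (a :: z) + occR w z end.

Fixpoint sc (A : eqType) (w u z : seq A) : nat :=
  match u with [::] => 0 | a :: u' => sw w (a :: u' ++ z) + sc w u' z end.

Lemma count_iotaS (P : pred nat) m n :
  count P (iota m.+1 n) = count (fun i => P i.+1) (iota m n).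
Proof. by elim: n m => //= n IH m; rewrite IH. Qed.

Lemma occE (A : eqType) (w v : seq A) : 0 < size w -> occ w v = occR w v.
Proof.
move=> w0; elim: v => [|a z IH].
  by rewrite /occ /=; case: w w0.
rewrite /occ /= count_iotaS -IH /occ /sw /=.
by rewrite drop0.
Qed.

Lemma sc_cat (A : eqType) (w u z : seq A) : occR w (u ++ z) = sc w u z + occR w z.
Proof. by elim: u => //= a u ->; rewrite addnA. Qed.

Lemma sw_ext (A : eqType) (w s p z : seq A) :
  size w <= size p -> sw w (s ++ p ++ z) = sw w (s ++ p).
Proof.
move=> h; rewrite /sw catA takel_cat // size_cat.
by apply: leq_trans h (leq_addl _ _).
Qed.

Lemma sc_ext (A : eqType) (w u p z : seq A) :
  size w <= size p -> sc w u (p ++ z) = sc w u p.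
Proof.
move=> h; elim: u => //= a u ->.
by rewrite -!cat_cons (sw_ext (a :: u) z h).
Qed.

Lemma occR_short (A : eqType) (w z : seq A) : size z < size w -> occR w z = 0.
Proof.
elim: z => //= a z IH hs.
rewrite IH ?(ltn_trans _ hs) // addn0 /sw take_oversize ?(ltnW hs) //.
case: eqP => // e; by rewrite -e ltnn in hs.
Qed.

Lemma occR_w (A : eqType) (w : seq A) : 0 < size w -> occR w w = 1.
Proof.
case: w => // a w' _ /=.
by rewrite occR_short // /sw take_size eqxx.
Qed.

Lemma sw_nil (A : eqType) (w : seq A) : 0 < size w -> sw w [::] = false.
Proof. by case: w. Qed.

Lemma sw_catP (A : eqType) (w y : seq A) : sw w y <-> exists z, y = w ++ z.
Proof.
split.
  move/eqP => h; exists (drop (size w) y).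
  by rewrite -{1}(cat_take_drop (size w) y) h.
by move=> [z ->]; rewrite /sw take_size_cat.
Qed.

Lemma occR_sw (A : eqType) (w y : seq A) : 0 < size w -> sw w y -> 0 < occR w y.
Proof.
move=> w0; case: y => [|a z]; first by rewrite sw_nil.
by move=> /= ->.
Qed.

Lemma S_lem (A : eqType) (w : seq A) k v :
  (exists x y, v = x ++ y /\ sw w y /\ k < occR w y) <-> k < occR w v.
Proof.
split.
  move=> [x [y [-> [_ h]]]]; rewrite sc_cat.
  by apply: leq_trans h (leq_addl _ _).
elim: v => [//|a z IH] /=.
case hs: (sw w (a :: z)) => h.
  by exists [::], (a :: z); split => //; split => //=; rewrite hs.
have [x [y [-> hy]]] := IH h.
by exists (a :: x), y; split.
Qed.

Fixpoint gword (A : Type) (s : seq A) : gre A :=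
  match s with [::] => GEps _ | a :: s' => GConc (GLetter a) (gword s') end.

Lemma gwordP (A : Type) (s u : seq A) : gre_lang (gword s) u <-> u = s.
Proof.
elim: s u => [|a s IH] u /=; first by [].
split.
  by move=> [x [y [-> [-> /IH ->]]]].
move=> ->; exists [:: a], s; split => //; split => //; exact/IH.
Qed.

Definition Inter (A : Type) (E F : gre A) := GCompl (GUnion (GCompl E) (GCompl F)).

Arguments Inter : simpl never.

Lemma InterP (A : Type) (E F : gre A) u :
  gre_lang (Inter E F) u <-> gre_lang E u /\ gre_lang F u.
Proof.
rewrite /Inter /=; split.
  move=> H; split; apply: NNPP => H'; apply: H; by [left|right].
by move=> [h1 h2] [h|h].
Qed.

Lemma sh_Inter (A : Type) (E F : gre A) :
  star_height (Inter E F) = maxn (star_height E) (star_height F).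
Proof. by []. Qed.

Definition EW (A : Type) (w : seq A) := GConc (gword w) (GCompl (GEmpty _)).

Arguments EW : simpl never.

Lemma EWP (A : eqType) (w u : seq A) : gre_lang (EW w) u <-> sw w u.
Proof.
rewrite sw_catP /EW /=; split.
  by move=> [x [y [-> [/gwordP -> _]]]]; exists y.
by move=> [z ->]; exists w, z; split => //; split => //; exact/gwordP.
Qed.

Fixpoint EM (A : Type) (w : seq A) k : gre A :=
  match k with
  | 0 => EW w
  | k'.+1 => Inter (EW w) (GConc (GCompl (GEps _)) (EM w k'))
  end.

Lemma EMP (A : eqType) (w : seq A) k y : 0 < size w ->
  gre_lang (EM w k) y <-> sw w y /\ k < occR w y.
Proof.
move=> w0; elim: k y => [|k IH] y.
  rewrite [EM _ _]/= EWP; split => [h|[]//]; split => //; exact: occR_sw.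
rewrite [EM _ _]/= InterP EWP /=; split.
  move=> [hs [x [y' [ey [hx /IH [hs' hk]]]]]]; subst y; split => //.
  case: x hx hs => [//|a x] _ hs.
  rewrite /= hs sc_cat.
  have := leq_addl (sc w x y') (occR w y').
  move: hk; lia.
move=> [hs hk]; split => //.
case: y hs hk => [|a z]; first by rewrite sw_nil.
move=> /= hs; rewrite hs add1n ltnS => hk.
have [x [y' [-> [h1 h2]]]] := proj2 (S_lem w k z) hk.
exists (a :: x), y'; split => //; split => //; exact/IH.
Qed.

Definition EGe (A : Type) (w : seq A) k : gre A :=
  match k with
  | 0 => GCompl (GEmpty _)
  | k'.+1 => GConc (GCompl (GEmpty _)) (EM w k')
  end.

Lemma EGeP (A : eqType) (w : seq A) k v : 0 < size w ->
  gre_lang (EGe w k) v <-> k <= occR w v.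
Proof.
move=> w0; case: k => [|k] /=; first by split => // _ [].
rewrite -(S_lem w k v); split.
  by move=> [x [y [-> [_ /(EMP _ _ w0) h]]]]; exists x, y.
by move=> [x [y [-> h]]]; exists x, y; split => //; split => //; exact/EMP.
Qed.

Definition ECount (A : Type) (w : seq A) k := Inter (EGe w k) (GCompl (EGe w k.+1)).

Lemma ECountP (A : eqType) (w : seq A) k v : 0 < size w ->
  gre_lang (ECount w k) v <-> occR w v = k.
Proof.
move=> w0; rewrite /ECount InterP.
change (gre_lang (GCompl ?E) v) with (~ gre_lang E v).
rewrite !EGeP //.
split; first by move=> [h1 h2]; apply/eqP; rewrite eqn_leq h1 andbT leqNgt; apply/negP.
by move=> ->; split => //; rewrite ltnn.
Qed.

Lemma sh_word (A : Type) (s : seq A) : star_height (gword s) = 0.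
Proof. by elim: s => //= a s ->. Qed.

Lemma sh_EM (A : Type) (w : seq A) k : star_height (EM w k) = 0.
Proof. elim: k => [|k IH]; rewrite /= ?sh_Inter /EW /= ?sh_word ?IH //. Qed.

Lemma sh_ECount (A : Type) (w : seq A) k : star_height (ECount w k) = 0.
Proof. by rewrite /ECount sh_Inter /=; case: k => [|k] /=; rewrite ?sh_EM sh_word. Qed.

Lemma rcons_single (A : Type) (u : seq A) a b :
  rcons u a = [:: b] <-> u = [::] /\ a = b.
Proof.
split; last by move=> [-> ->].
case: u => [|c u] /=; first by case=> ->.
by case=> _; case: u.
Qed.

Lemma rq (A : eqType) (E : gre A) : star_height E = 0 -> forall a,
  exists E', star_height E' = 0 /\
   forall u, gre_lang E' u <-> gre_lang E (rcons u a).
Proof.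
elim: E => [|| b | E IHE F IHF | E IHE F IHF | E IHE | E IHE] /= Hsh a.
- by exists (GEmpty A).
- exists (GEmpty A); split => // u /=; split => //; by case: u.
- case: (eqVneq a b) => [->|nab].
    exists (GEps A); split => // u /=; rewrite rcons_single; tauto.
  exists (GEmpty A); split => // u /=; rewrite rcons_single.
  split => // [[_ e]]; by rewrite e eqxx in nab.
- move/eqP: Hsh; rewrite -leqn0 geq_max !leqn0 => /andP[/eqP hE /eqP hF].
  have [E1 [h1 s1]] := IHE hE a; have [F1 [h2 s2]] := IHF hF a.
  exists (GUnion E1 F1); split; first by rewrite /= h1 h2.
  by move=> u /=; rewrite s1 s2.
- move/eqP: Hsh; rewrite -leqn0 geq_max !leqn0 => /andP[/eqP hE /eqP hF].
  have [E1 [h1 s1]] := IHE hE a; have [F1 [h2 s2]] := IHF hF a.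
  have [Z [hZ sZ]] : exists Z : gre A, star_height Z = 0 /\
      forall u, gre_lang Z u <-> u = [::] /\ gre_lang F [::].
    case: (classic (gre_lang F [::])) => hn.
      by exists (GEps A); split => // u /=; tauto.
    by exists (GEmpty A); split => // u /=; tauto.
  exists (GUnion (GConc E1 Z) (GConc E F1)); split.
    by rewrite /= h1 hZ hE h2.
  move=> u /=; split.
    move=> [[x [y [-> [/s1 hx /sZ [-> hF0]]]]] | [x [y [-> [hx /s2 hy]]]]].
      by exists (rcons (x ++ [::]) a), [::]; rewrite cats0 cats0.
    by exists x, (rcons y a); rewrite rcons_cat.
  move=> [x [y [e [hx hy]]]].
  case/lastP: y e hy => [|y b] e hy.
    left; exists u, [::]; rewrite cats0; split => //; split.
      by apply/s1; rewrite e cats0.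
    exact/sZ.
  right; rewrite -rcons_cat in e; case: (rcons_inj e) => -> eb.
  exists x, y; split => //; split => //; apply/s2; by rewrite eb.
- by [].
- have [E1 [h1 s1]] := IHE Hsh a.
  exists (GCompl E1); split => // u /=; by rewrite s1.
Qed.

Lemma rqw (A : eqType) (s : seq A) (E : gre A) : star_height E = 0 ->
  exists E', star_height E' = 0 /\
   forall u, gre_lang E' u <-> gre_lang E (u ++ s).
Proof.
elim: s E => [|a s IH] E hE.
  by exists E; split => // u; rewrite cats0.
have [E1 [h1 s1]] := IH E hE.
have [E2 [h2 s2]] := rq h1 a.
exists E2; split => // u; by rewrite s2 s1 cat_rcons.
Qed.

Lemma occR_cons (A : eqType) (w : seq A) a z :
  occR w (a :: z) = sw w (a :: z) + occR w z.
Proof. by []. Qed.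

Lemma D_lem (A : eqType) (w : seq A) v : 0 < size w -> 0 < occR w v ->
  exists u0 y, v = u0 ++ y /\ sw w y /\ occR w (u0 ++ w) = 1 /\ occR w y = occR w v.
Proof.
move=> w0; elim: v => [//|a z IH].
rewrite occR_cons; case hs: (sw w (a :: z)) => /= h.
  by exists [::], (a :: z); rewrite /= occR_w // hs.
have [u0 [y [ez [hy [h1 h2]]]]] := IH h.
exists (a :: u0), y; split; first by rewrite ez.
split => //; split => //.
rewrite [_ ++ _]/= occR_cons h1.
have [z' ey] := (proj1 (sw_catP w y)) hy.
have hs' : sw w ((a :: u0) ++ w) = false.
  by rewrite -(@sw_ext _ w (a :: u0) w z') // -ey /= -ez.
by move: hs'; rewrite [_ ++ _]/= => ->.
Qed.

Lemma P_lem (A : eqType) (w : seq A) k y : 0 < size w -> sw w y -> k < occR w y ->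
  exists u y', y = u ++ y' /\ sw w y' /\ occR w (u ++ w) = k.+1 /\
     occR w y' = occR w y - k.
Proof.
move=> w0 hy; elim: k => [|k IH] hk.
  by exists [::], y; rewrite /= occR_w // subn0.
have [u [y' [ey [hy' [h1 h2]]]]] := IH (ltnW hk).
case: y' ey hy' h2 => [|b z']; first by rewrite sw_nil.
move=> ey hy' h2.
have hz : 0 < occR w z' by move: h2 hk; rewrite occR_cons hy'; lia.
have [u1 [y'' [ez [hy'' [h3 h4]]]]] := D_lem w0 hz.
exists (u ++ b :: u1), y''; split; first by rewrite ey ez -catA.
split => //; split; last by move: h2 h4; rewrite occR_cons hy'; lia.
have [z2 e2] := (proj1 (sw_catP w (b :: z'))) hy'.
have [z3 e3] := (proj1 (sw_catP w y'')) hy''.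
have hsc : sc w u (b :: u1 ++ w) = sc w u w.
  have hsz : size w <= size (b :: u1 ++ w) by rewrite /= size_cat; lia.
  rewrite -(sc_ext u z3 hsz) /= -catA -e3 -ez e2 sc_ext //.
have hsb : sw w (b :: u1 ++ w) = true.
  rewrite -cat_cons -(@sw_ext _ w (b :: u1) w z3) // /= -e3 -ez; exact: hy'.
move: h1; rewrite sc_cat occR_w // => h1.
rewrite -catA sc_cat /= hsb h3 hsc; lia.
Qed.

Definition Kprop (A : eqType) (w : seq A) n (u : seq A) :=
  sw w (u ++ w) /\ occR w (u ++ w) = n.+1.

Lemma B_lem (A : eqType) (w : seq A) n t j y : 0 < size w -> 0 < t ->
  sw w y -> occR w y = j * n + t ->
  exists ws x, y = flatten ws ++ x /\
    (forall i, i < size ws -> Kprop w n (nth [::] ws i)) /\ sw w x /\ occR w x = t.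
Proof.
move=> w0 t0; elim: j y => [|j IH] y hy ho.
  by exists [::], y; rewrite ho.
have hk : n < occR w y by rewrite ho mulSn; lia.
have [u [y' [ey [hy' [h1 h2]]]]] := P_lem w0 hy hk.
have h2' : occR w y' = j * n + t by rewrite h2 ho mulSn; lia.
have [ws [x [e [hb [hx hxo]]]]] := IH y' hy' h2'.
exists (u :: ws), x; split; first by rewrite /= ey e catA.
split => //.
case=> [_|i hi] /=; last exact: hb.
split => //.
have [z ez] := (proj1 (sw_catP w y')) hy'.
by rewrite -(@sw_ext _ w u w z) // -ez -ey.
Qed.

Lemma Snd_lem (A : eqType) (w : seq A) n ws x : 0 < size w ->
  (forall i, i < size ws -> Kprop w n (nth [::] ws i)) -> sw w x ->
  sw w (flatten ws ++ x) /\ occR w (flatten ws ++ x) = size ws * n + occR w x.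
Proof.
move=> w0; elim: ws => [|u ws IH] hb hx; first by [].
have [hs ho] := IH (fun i hi => hb i.+1 hi) hx.
have [k1 k2] := hb 0 isT.
rewrite /= in k1 k2.
have [z ez] := (proj1 (sw_catP w _)) hs.
rewrite /= -catA ez (@sw_ext _ w u w z) // k1; split => //.
rewrite sc_cat sc_ext // -ez ho mulSn.
move: k2; rewrite sc_cat occR_w //; lia.
Qed.

Theorem mainTheorem1 (A : finType) (w : seq A) :
  0 < size w -> size w <= 3 ->
  (forall k : nat, gen_star_height_eq (Count w k) 0) /\
  (forall n k : nat, 2 <= n -> k < n -> gen_star_height_le (ModCount w k n) 1).
Proof.
move=> w0 _; split.
  move=> k; split; last by move=> h'; rewrite ltn0.
  exists (ECount w k); split; last by rewrite sh_ECount.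
  by move=> u; rewrite ECountP // /Count occE.
move=> n k n2 kn.
have [EU [hU sU]] := rqw w (sh_ECount w 1).
have hI : star_height (Inter (EW w) (ECount w n.+1)) = 0.
  by rewrite sh_Inter sh_ECount /EW /= sh_word.
have [EK [hK sK]] := rqw w hI.
pose t := if k == 0 then n else k.
have t0 : 0 < t by rewrite /t; case: eqP => //; lia.
have tk : t %% n = k by rewrite /t; case: eqP => [->|_]; rewrite ?modnn ?modn_small.
have [ET [hT sT]] : exists E : gre A, star_height E = 0 /\
    forall u, gre_lang E u <-> sw w u /\ occR w u = t.
  exists (Inter (EW w) (ECount w t)); split.
    by rewrite sh_Inter sh_ECount /EW /= sh_word.
  by move=> u; rewrite InterP EWP ECountP.
have [Z [hZ sZ]] : exists E : gre A, star_height E = 0 /\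
    forall u, gre_lang E u <-> k = 0 /\ occR w u = 0.
  case: (eqVneq k 0) => [->|k0].
    exists (ECount w 0); split; first exact: sh_ECount.
    by move=> u; rewrite ECountP //; tauto.
  by exists (GEmpty A); split => // u /=; split => // [[e _]]; rewrite e in k0.
have hKP : forall u, gre_lang EK u <-> Kprop w n u.
  by move=> u; rewrite sK InterP EWP ECountP.
exists (GUnion Z (GConc EU (GConc (GStar EK) ET))); split; last first.
  by rewrite /= hU hK hT hZ.
move=> u; rewrite /ModCount occE //=; split.
  case=> [/sZ [-> ->]|]; first by rewrite mod0n.
  move=> [x [y [-> [/sU hx [x' [y' [-> [[ws [-> hws]] /sT [hy' hy'o]]]]]]]]].
  have hb : forall i, i < size ws -> Kprop w n (nth [::] ws i).
    by move=> i hi; apply/hKP; apply: hws.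
  have [hs ho] := Snd_lem w0 hb hy'.
  have [z ez] := (proj1 (sw_catP w _)) hs.
  move: hx; rewrite ECountP // sc_cat occR_w // => hx.
  rewrite sc_cat ez sc_ext // -ez ho hy'o.
  have -> : sc w x w = 0 by lia.
  by rewrite add0n modnMDl tk.
move=> hm.
case: (posnP (occR w u)) => [c0|cpos].
  by left; apply/sZ; split => //; rewrite -hm c0 mod0n.
right.
have [u0 [y [eu [hy [h1 h2]]]]] := D_lem w0 cpos.
have [j hj] : exists j, occR w y = j * n + t.
  rewrite h2 /t; case: eqP => [k0|k0].
    have := divn_eq (occR w u) n; rewrite hm k0 addn0.
    case: (occR w u %/ n) => [|q] e.
      by move: cpos; rewrite e.
    by exists q; rewrite e mulSn addnC.
  by exists (occR w u %/ n); rewrite {1}(divn_eq (occR w u) n) hm.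
have [ws [x [ey [hb [hx hxo]]]]] := B_lem w0 t0 hy hj.
exists u0, y; split => //; split; first by apply/sU; rewrite ECountP.
exists (flatten ws), x; split => //; split; last exact/sT.
exists ws; split => // i hi; apply/hKP; exact: hb.
Qed.
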